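(* Let $A$ and $B$ be two physical systems with Hamiltonians $H^A=\sum_{x=1}^m a_x|x\rangle\langle x|^A$ and $H^B=\sum_{y=1}^n b_y|y\rangle\langle y|^B$ that are relatively non-degenerate. Then a quantum channel $\mathcal{N}:A\to B$ is time-translation covariant if and only if $$\mathcal{N}^{A\to B}=\Delta^{B\to B}\circ\mathcal{N}^{A\to B}\circ\Delta^{A\to A},$$ where $\Delta^{A\to A}(\rho)=\sum_{x=1}^m\langle x|\rho|x\rangle|x\rangle\langle x|$ and $\Delta^{B\to B}(\rho)=\sum_{y=1}^n\langle y|\rho|y\rangle|y\rangle\langle y|$ are the completely dephasing channels in the energy eigenbases.
   Context: The Hamiltonians are relatively non-degenerate if for all $x,x'\in[m]$ and $y,y'\in[n]$, $a_x-a_{x'}=b_y-b_{y'}$ implies $x=x'$ and $y=y'$ (in particular both are non-degenerate, so the eigenbases are unique up to phases). A channel (CPTP map) $\mathcal{E}:A\to B$ is time-translation covariant if $\mathcal{E}(e^{-iH^At}\rho e^{iH^At})=e^{-iH^Bt}\mathcal{E}(\rho)e^{iH^Bt}$ for all $t\in\mathbb{R}$ and all density matrices $\rho$ on $A$. *)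

(* Defs.v *)
From HB Require Import structures.
From mathcomp Require Import all_boot all_order all_algebra.
From mathcomp Require Import complex mxtens.
From mathcomp Require Import reals trigo.
Set Implicit Arguments. Unset Strict Implicit. Unset Printing Implicit Defensive.
Import Order.TTheory GRing.Theory Num.Theory.
Local Open Scope ring_scope.

Section QDefs.
Variable R : realType.
Local Notation C := R[i].

Definition adj {p q : nat} (A : 'M[C]_(p, q)) : 'M[C]_(q, p) :=
  (map_mx (fun z : C => z^*) A)^T.

Definition psd {k : nat} (A : 'M[C]_k) : Prop :=
  forall v : 'cV[C]_k, 0 <= (adj v *m A *m v) 0 0.

Definition density {k : nat} (rho : 'M[C]_k) : Prop := psd rho /\ \tr rho = 1.

(* ampliation id_k (x) E acting on 'M_(k*m) = M_k (x) M_m, indices (i, x) *)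
Definition ampl (k : nat) {m n : nat} (E : 'M[C]_m -> 'M[C]_n)
  (X : 'M[C]_(k * m)) : 'M[C]_(k * n) :=
  \matrix_(p, q)
    let: (i, y) := mxtens_unindex p in
    let: (j, y') := mxtens_unindex q in
    E (\matrix_(x, x') X (mxtens_index (i, x)) (mxtens_index (j, x'))) y y'.

Arguments ampl k {m n} E X.

Definition completely_positive {m n : nat} (E : 'M[C]_m -> 'M[C]_n) : Prop :=
  forall (k : nat) (X : 'M[C]_(k * m)), psd X -> psd (ampl k E X).

Definition trace_preserving {m n : nat} (E : 'M[C]_m -> 'M[C]_n) : Prop :=
  forall X, \tr (E X) = \tr X.

Definition channel {m n : nat} (E : 'M[C]_m -> 'M[C]_n) : Prop :=
  linear E /\ completely_positive E /\ trace_preserving E.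

(* e^{-i H t} for H = sum_x a_x |x><x| : diag(e^{-i a_x t}) *)
Definition evol {m : nat} (a : 'I_m -> R) (t : R) : 'M[C]_m :=
  diag_mx (\row_x (Complex (cos (a x * t)) (- sin (a x * t)))).

Definition dephase {m : nat} (rho : 'M[C]_m) : 'M[C]_m :=
  diag_mx (\row_x rho x x).

Definition time_covariant {m n : nat} (a : 'I_m -> R) (b : 'I_n -> R)
  (E : 'M[C]_m -> 'M[C]_n) : Prop :=
  forall (t : R) (rho : 'M[C]_m), density rho ->
    E (evol a t *m rho *m evol a (- t)) = evol b t *m E rho *m evol b (- t).

Definition rel_nondegenerate {m n : nat} (a : 'I_m -> R) (b : 'I_n -> R) : Prop :=
  forall (x x' : 'I_m) (y y' : 'I_n), a x - a x' = b y - b y' -> x = x' /\ y = y'.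

End QDefs.

(* Main.v *)
Require Import Defs.
From HB Require Import structures.
From mathcomp Require Import all_boot all_order all_algebra.
From mathcomp Require Import complex mxtens.
From mathcomp Require Import reals trigo.
From mathcomp Require Import ring lra.
Import Order.TTheory GRing.Theory Num.Theory.
Local Open Scope ring_scope.
Set Implicit Arguments. Unset Strict Implicit.

Definition ee (R : realType) (s : R) : R[i] := Complex (cos s) (- sin s).

Lemma eeM (R : realType) (s1 s2 : R) : ee s1 * ee s2 = ee (s1 + s2).
Proof.
have -> : ee s1 * ee s2 = Complex (cos s1 * cos s2 - (- sin s1) * (- sin s2))
   (cos s1 * (- sin s2) + (- sin s1) * cos s2) by [].
rewrite /ee cosD sinD; congr Complex; ring.
Qed.

Lemma eeN1 (R : realType) (s : R) : ee s * ee (- s) = 1.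
Proof. by rewrite eeM subrr /ee cos0 sin0 oppr0. Qed.

Lemma ee_inj (R : realType) (al be : R) :
  (forall t, ee (al * t) = ee (be * t)) -> al = be.
Proof.
move=> H; case: (eqVneq al be) => // hne.
have hne' : al - be != 0 by rewrite subr_eq0.
set t := pi / (al - be).
have E : al * t = be * t + pi by rewrite /t; field.
have := H t; rewrite E /ee => -[hc hs].
rewrite cosDpi in hc; rewrite sinDpi in hs.
have hc0 : cos (be * t) = 0 by lra.
have hs0 : sin (be * t) = 0 by lra.
have := cos2Dsin2 (be * t); rewrite hc0 hs0 expr0n /= addr0 => /eqP.
by rewrite eq_sym oner_eq0.
Qed.

Lemma evolE (R : realType) m (a : 'I_m -> R) t (M : 'M[R[i]]_m) :
  evol a t *m M *m evol a (- t) = \matrix_(i, j) (ee (a i * t) * M i j * ee (a j * - t)).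
Proof. by rewrite /evol mul_diag_mx mul_mx_diag; apply/matrixP => i j; rewrite !mxE. Qed.

Lemma rk1E (R : realType) m (u w : 'cV[R[i]]_m) i j : (u *m adj w) i j = u i 0 * (w j 0)^*.
Proof. by rewrite !mxE big_ord1 !mxE. Qed.

Lemma cD (C : numClosedFieldType) (x y : C) : (x + y)^* = x^* + y^*.
Proof. exact: rmorphD. Qed.
Lemma cM (C : numClosedFieldType) (x y : C) : (x * y)^* = x^* * y^*.
Proof. exact: rmorphM. Qed.

Lemma polar (C : numClosedFieldType) (ui uj wi wj : C) : ui * wj^* = 2^-1 *
  (((ui + wi) * (uj + wj)^* - ui * uj^* - wi * wj^*) +
   'i * ((ui + 'i * wi) * (uj + 'i * wj)^* - ui * uj^* - wi * wj^*)).
Proof.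
rewrite !cD !cM conjCi.
have hj : 'i * 'i = -1 :> C by rewrite -expr2 sqrCi.
set j := 'i in hj *.
have -> : (ui + wi) * (uj^* + wj^*) - ui * uj^* - wi * wj^* +
  j * ((ui + j * wi) * (uj^* + - j * wj^*) - ui * uj^* - wi * wj^*) =
  2 * (ui * wj^*) + (j * j + 1) * (wi * uj^* - ui * wj^* - j * wi * wj^*) by ring.
by rewrite hj addNr mul0r addr0 mulKf // pnatr_eq0.
Qed.

Lemma cS (C : numClosedFieldType) k (F : 'I_k -> C) : (\sum_i F i)^* = \sum_i (F i)^*.
Proof. exact: rmorph_sum. Qed.

Lemma linF (R : realType) m n (N : 'M[R[i]]_m -> 'M[R[i]]_n) : linear N ->
  [/\ N 0 = 0, forall u v, N (u + v) = N u + N v & forall c u, N (c *: u) = c *: N u].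
Proof.
move=> lN.
have N0 : N 0 = 0 by have := lN (-1) 0 0; rewrite scaler0 add0r scaleN1r addNr.
split=> //.
  by move=> u v; have := lN 1 u v; rewrite !scale1r.
by move=> c u; have := lN c u 0; rewrite !addr0 N0 addr0.
Qed.

Definition cov (R : realType) m n (a : 'I_m -> R) (b : 'I_n -> R)
  (N : 'M[R[i]]_m -> 'M[R[i]]_n) t X :=
  N (evol a t *m X *m evol a (- t)) = evol b t *m N X *m evol b (- t).

Lemma covL (R : realType) m n (a : 'I_m -> R) (b : 'I_n -> R)
  (N : 'M[R[i]]_m -> 'M[R[i]]_n) t c X Y : linear N ->
  cov a b N t X -> cov a b N t Y -> cov a b N t (c *: X + Y).
Proof.
rewrite /cov => lN hX hY; have [N0 ND NZ] := linF lN.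
by rewrite mulmxDr mulmxDl -scalemxAr -scalemxAl ND NZ hX hY ND NZ
  mulmxDr mulmxDl -scalemxAr -scalemxAl.
Qed.

Lemma cov0 (R : realType) m n (a : 'I_m -> R) (b : 'I_n -> R)
  (N : 'M[R[i]]_m -> 'M[R[i]]_n) t : linear N -> cov a b N t 0.
Proof.
move=> lN; have [N0 ND NZ] := linF lN.
by rewrite /cov mulmx0 mul0mx N0 mulmx0 mul0mx.
Qed.

Lemma rk1M (R : realType) m (u w : 'cV[R[i]]_m) :
  u *m adj w = \matrix_(i, j) (u i 0 * (w j 0)^*).
Proof. by apply/matrixP => i j; rewrite rk1E mxE. Qed.

Lemma psd_rank1 (R : realType) m (v : 'cV[R[i]]_m) : psd (v *m adj v).
Proof.
move=> w.
have key : forall i j : 'I_1, (adj v *m w) i j = ((adj w *m v) j i)^*.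
  move=> i j; rewrite !mxE cS; apply: eq_bigr => k _.
  by rewrite !mxE cM conjCK mulrC.
rewrite mulmxA -mulmxA; rewrite [X in 0 <= X]mxE big_ord1 key.
exact: mul_conjC_ge0.
Qed.

Lemma cov_rank1 (R : realType) m n (a : 'I_m -> R) (b : 'I_n -> R)
  (N : 'M[R[i]]_m -> 'M[R[i]]_n) t (v : 'cV[R[i]]_m) : linear N ->
  time_covariant a b N -> cov a b N t (v *m adj v).
Proof.
move=> lN Hc; set P := v *m adj v.
have trP : \tr P = \sum_i v i 0 * (v i 0)^*.
  by rewrite /mxtrace; apply: eq_bigr => i _; rewrite rk1E.
have ge : forall i : 'I_m, true -> 0 <= v i 0 * (v i 0)^*.
  by move=> i _; exact: mul_conjC_ge0.
have trge0 : 0 <= \tr P by rewrite trP sumr_ge0.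
case: (eqVneq (\tr P) 0) => [tr0|trn0].
  have v0 : forall i, v i 0 = 0.
    move=> i; move/eqP: tr0; rewrite trP psumr_eq0 //.
    move/allP/(_ i (mem_index_enum i)) => /implyP /(_ isT).
    by rewrite mulf_eq0 conjC_eq0 orbb => /eqP.
  have -> : P = 0 by apply/matrixP => i j; rewrite rk1E v0 mul0r mxE.
  exact: cov0.
have dens : density ((\tr P)^-1 *: P).
  split; last by rewrite mxtraceZ mulVf.
  move=> w; rewrite -scalemxAr -scalemxAl mxE.
  by rewrite mulr_ge0 ?invr_ge0 //; exact: psd_rank1.
have h : cov a b N t ((\tr P)^-1 *: P) by exact: Hc.
have h0 : cov a b N t 0 by exact: cov0.
have := @covL R m n a b N t (\tr P) _ _ lN h h0.
by rewrite addr0 scalerA mulfV // scale1r.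
Qed.

Lemma cov_all_rk1 (R : realType) m n (a : 'I_m -> R) (b : 'I_n -> R)
  (N : 'M[R[i]]_m -> 'M[R[i]]_n) t (u w : 'cV[R[i]]_m) : linear N ->
  time_covariant a b N -> cov a b N t (u *m adj w).
Proof.
move=> lN Hc.
have cSv : forall v : 'cV[R[i]]_m, cov a b N t (v *m adj v).
  by move=> v; exact: cov_rank1.
have h0 : cov a b N t 0 by exact: cov0.
have cDv : forall X Y, cov a b N t X -> cov a b N t Y -> cov a b N t (X + Y).
  by move=> X Y hX hY; have := @covL R m n a b N t 1 _ _ lN hX hY; rewrite scale1r.
have cZv : forall k0 X, cov a b N t X -> cov a b N t (k0 *: X).
  by move=> k0 X hX; have := @covL R m n a b N t k0 _ _ lN hX h0; rewrite addr0.
have cNv : forall X, cov a b N t X -> cov a b N t (- X).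
  by move=> X hX; have := cZv (-1) X hX; rewrite scaleN1r.
have -> : u *m adj w = 2^-1 *: ((u + w) *m adj (u + w) - u *m adj u - w *m adj w +
   'i *: ((u + 'i *: w) *m adj (u + 'i *: w) - u *m adj u - w *m adj w)).
  by rewrite !rk1M; apply/matrixP => i j; rewrite !mxE; exact: polar.
apply: (cZv); apply: (cDv); last apply: (cZv).
  by apply: (cDv); [apply: (cDv); [|apply: (cNv)] | apply: (cNv)].
by apply: (cDv); [apply: (cDv); [|apply: (cNv)] | apply: (cNv)].
Qed.

Lemma delta_rk1 (R : realType) m (x x' : 'I_m) :
  delta_mx x x' = delta_mx x 0 *m adj (delta_mx x' 0 : 'cV[R[i]]_m).
Proof.
apply/matrixP => i j; rewrite rk1E !mxE eqxx !andbT conjC_nat.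
by rewrite -natrM mulnb.
Qed.

Lemma evol_delta (R : realType) m (a : 'I_m -> R) t (x x' : 'I_m) :
  evol a t *m delta_mx x x' *m evol a (- t) =
  (ee (a x * t) * ee (a x' * - t)) *: delta_mx x x'.
Proof.
rewrite evolE; apply/matrixP => i j; rewrite !mxE.
by case: (eqVneq i x) => [->|]; case: (eqVneq j x') => [->|] /=;
  rewrite ?mulr1 ?mulr0 ?mul0r.
Qed.

Lemma Nd_zero (R : realType) m n (a : 'I_m -> R) (b : 'I_n -> R)
  (N : 'M[R[i]]_m -> 'M[R[i]]_n) : rel_nondegenerate a b -> linear N ->
  time_covariant a b N -> forall x x' y y', (x != x') || (y != y') ->
  N (delta_mx x x') y y' = 0.
Proof.
move=> nd lN Hc x x' y y' hne; have [N0 ND NZ] := linF lN.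
case: (eqVneq (N (delta_mx x x') y y') 0) => // hM; exfalso.
have : a x - a x' = b y - b y'.
  apply: ee_inj => t.
  have h : cov a b N t (delta_mx x x') by rewrite delta_rk1; exact: cov_all_rk1.
  rewrite /cov evol_delta NZ in h.
  move/matrixP/(_ y y'): h; rewrite evolE !mxE => h2.
  have h3 : ee (a x * t) * ee (a x' * - t) = ee (b y * t) * ee (b y' * - t).
    by apply: (mulIf hM); rewrite h2 mulrAC.
  move: h3; rewrite !eeM.
  have -> : a x * t + a x' * - t = (a x - a x') * t by ring.
  by have -> : b y * t + b y' * - t = (b y - b y') * t by ring.
move/nd => [ex ey]; move: hne; by rewrite ex ey !eqxx.
Qed.

Lemma dephase_evol (R : realType) m (a : 'I_m -> R) t (M : 'M[R[i]]_m) :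
  dephase (evol a t *m M *m evol a (- t)) = dephase M.
Proof.
rewrite evolE; apply/matrixP => i j; rewrite /dephase !mxE.
by rewrite mulrAC mulrN eeN1 mul1r.
Qed.

Lemma evol_dephase (R : realType) m (a : 'I_m -> R) t (M : 'M[R[i]]_m) :
  evol a t *m dephase M *m evol a (- t) = dephase M.
Proof.
rewrite evolE; apply/matrixP => i j; rewrite /dephase !mxE.
case: (eqVneq i j) => [->|] /=; last by rewrite !mulr0n mulr0 mul0r.
by rewrite !mulr1n mulrAC mulrN eeN1 mul1r.
Qed.

From Stdlib Require Import FunctionalExtensionality.
Unset Implicit Arguments.

Theorem theorem2 (R : realType) (m n : nat) (a : 'I_m -> R) (b : 'I_n -> R)
  (N : 'M[R[i]]_m -> 'M[R[i]]_n) :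
  rel_nondegenerate a b -> channel N ->
  (time_covariant a b N <-> N = (fun rho => dephase (N (dephase rho)))).
Proof.
move=> nd [lN _]; have [N0 ND NZ] := linF lN; split.
  move=> Hc.
  have Nz := Nd_zero nd lN Hc.
  have NsumE : forall X, N X = \sum_x X x x *: N (delta_mx x x).
    move=> X; rewrite {1}(matrix_sum_delta X) (big_morph N ND N0).
    apply: eq_bigr => x _; rewrite (big_morph N ND N0) (bigD1 x) //= big1 ?addr0 ?NZ //.
    move=> x' hx'; rewrite NZ.
    have -> : N (delta_mx x x') = 0.
      by apply/matrixP => y y'; rewrite mxE; apply: Nz; rewrite eq_sym hx'.
    by rewrite scaler0.
  apply: functional_extensionality => rho.
  have E1 : N (dephase rho) = N rho.
    rewrite !NsumE; apply: eq_bigr => x _.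
    by rewrite /dephase !mxE eqxx mulr1n.
  rewrite E1; apply/matrixP => y y'; rewrite /dephase !mxE.
  case: (eqVneq y y') => [->|hne]; first by rewrite mulr1n.
  rewrite mulr0n NsumE summxE big1 // => x _.
  by rewrite mxE Nz ?mulr0 // hne orbT.
move=> HN t rho _; rewrite HN /=.
by rewrite dephase_evol evol_dephase.
Qed.
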